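(* Let $\operatorname{St}_\eta\subset\mathbb{Z}^{E(\Gamma)}=C_1(\Gamma,\mathbb{Z})$ be the set of $\vec n=(n_e)_{e\in E(\Gamma)}$ such that $$\Big(\prod_{e\in E(\Gamma)}\{k\in\mathbb{Z}: Nn_e\le k\le N(n_e+1)\}\Big)\cap d_\Gamma^{-1}(-\eta)\neq\emptyset .$$ Then for every integer $M>0$, the set $\operatorname{St}_\eta$ is a union of finitely many orbits of the group $H_1(\Gamma,M\mathbb{Z})$ acting on $C_1(\Gamma,\mathbb{Z})$ by translations.
   Context: $\Gamma$ is a finite graph with vertex set $V(\Gamma)$ and edge set $E(\Gamma)$ (loops and multiple edges allowed), with an auxiliary orientation. $C_1(\Gamma,\mathbb{Z})=\mathbb{Z}^{E(\Gamma)}$, $\overline{C}_0(\Gamma,\mathbb{Z})\subset\mathbb{Z}^{V(\Gamma)}$ is the group of integer $0$-chains whose coordinates sum to zero, $d_\Gamma\colon C_1(\Gamma,\mathbb{Z})\to\overline{C}_0(\Gamma,\mathbb{Z})$ is the boundary map, $H_1(\Gamma,\mathbb{Z})=\ker d_\Gamma$ and $H_1(\Gamma,M\mathbb{Z})=H_1(\Gamma,\mathbb{Z})\cap (M\mathbb{Z})^{E(\Gamma)}$. Here $\eta\in\overline{C}_0(\Gamma,\mathbb{Z})$ and $N\geq 1$ is a fixed integer. *)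

(* Defs.v *)
From mathcomp Require Import all_boot all_order all_algebra.
Set Implicit Arguments. Unset Strict Implicit. Unset Printing Implicit Defensive.
Import Order.TTheory GRing.Theory Num.Theory.
Local Open Scope ring_scope.

(* A finite graph Gamma: finite vertex type V, finite edge type E, and an
   auxiliary orientation given by source/target maps (loops and multiple
   edges allowed). *)

Definition bdry (V E : finType) (src tgt : E -> V) (x : {ffun E -> int})
  : {ffun V -> int} :=
  [ffun v => \sum_(e | tgt e == v) x e - \sum_(e | src e == v) x e].

Definition reduced_chain (V : finType) (eta : {ffun V -> int}) : Prop :=
  \sum_(v : V) eta v = 0.

Definition H1M (V E : finType) (src tgt : E -> V) (M : int)
  (h : {ffun E -> int}) : Prop :=
  bdry src tgt h = 0 /\ forall e, (M %| h e)%Z.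

Definition St (V E : finType) (src tgt : E -> V) (N : int)
  (eta : {ffun V -> int}) (n : {ffun E -> int}) : Prop :=
  exists k : {ffun E -> int},
    (forall e, N * n e <= k e <= N * (n e + 1)) /\
    bdry src tgt k = [ffun v => - eta v].

Definition translate (E : finType) (r h : {ffun E -> int}) : {ffun E -> int} :=
  [ffun e => r e + h e].

(* Main.v *)
Require Import Defs.
From mathcomp Require Import all_boot all_order all_algebra.
From mathcomp Require Import zify ring.
From Stdlib Require Import Classical.
Import Order.TTheory GRing.Theory Num.Theory.
Local Open Scope ring_scope.

Lemma choose_reps (T : finType) (X : eqType) (R : T -> X -> Prop) :
  exists s : seq X, (forall x, x \in s -> exists t, R t x) /\
    (forall t, (exists x, R t x) -> exists2 x, x \in s & R t x).
Proof.
suff H : forall l : seq T, exists s : seq X, (forall x, x \in s -> exists t, R t x) /\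
    (forall t, t \in l -> (exists x, R t x) -> exists2 x, x \in s & R t x).
  have [s [H1 H2]] := H (enum T); exists s; split => // t; apply: H2; by rewrite mem_enum.
elim=> [|t l [s [H1 H2]]]; first by exists [::].
have [[x Hx]|Hn] := classic (exists x, R t x).
- exists (x :: s); split.
  + move=> y; rewrite inE => /orP [/eqP ->|/H1] //; by exists t.
  + move=> t'; rewrite inE => /orP [/eqP ->|/H2 H] Ex; first by exists x; rewrite ?inE ?eqxx.
    have [y ys Ry] := H Ex; by exists y; rewrite // inE ys orbT.
- exists s; split => // t'; rewrite inE => /orP [/eqP -> Ex|/H2 //]; by case: Hn.
Qed.

Lemma bdry_lin (V E : finType) (src tgt : E -> V) (x y z : {ffun E -> int}) (a b : int) v :
  (forall e, x e = a * y e + b * z e) ->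
  bdry src tgt x v = a * bdry src tgt y v + b * bdry src tgt z v.
Proof.
move=> H; rewrite !ffunE.
rewrite (eq_bigr (fun e => a * y e + b * z e)); last by move=> e _; rewrite H.
rewrite [X in _ - X](eq_bigr (fun e => a * y e + b * z e)); last by move=> e _; rewrite H.
rewrite !big_split /= -!mulr_sumr; ring.
Qed.

Theorem lemma2p19 (V E : finType) (src tgt : E -> V) (N : int)
  (eta : {ffun V -> int}) (M : int) :
  1 <= N -> reduced_chain eta -> 0 < M ->
  exists reps : seq {ffun E -> int},
    forall n : {ffun E -> int},
      St src tgt N eta n <->
      exists2 r, r \in reps & exists h, H1M src tgt M h /\ n = translate r h.
Proof.
move=> N1 _ M0.
pose m := absz (M * N). pose p := absz N.
pose code (k n : {ffun E -> int}) : {ffun E -> 'I_m.+1 * 'I_p.+1} :=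
  [ffun e => (inord (absz ((k e %% (M * N))%Z)), inord (absz (k e - N * n e)%R))].
pose R (t : {ffun E -> 'I_m.+1 * 'I_p.+1}) (n : {ffun E -> int}) := exists k : {ffun E -> int},
    (forall e, N * n e <= k e <= N * (n e + 1)) /\
    bdry src tgt k = [ffun v => - eta v] /\ code k n = t.
have [s [H1 H2]] := @choose_reps _ _ R.
have MN0 : M * N != 0 by lia.
have MNpos : 0 < M * N by lia.
exists s => n; split.
- case=> k [Hb Hd].
  have [r rs [k' [Hb' [Hd' Hc]]]] := H2 (code k n) (ex_intro _ n (ex_intro _ k (conj Hb (conj Hd erefl)))).
  have Heq e : (k e %% (M * N))%Z = (k' e %% (M * N))%Z /\ k e - N * n e = k' e - N * r e.
    have := congr1 (fun f : {ffun E -> 'I_m.+1 * 'I_p.+1} => f e) Hc; rewrite /code /= !ffunE => -[/(congr1 val) h1 /(congr1 val) h2].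
    move: h1 h2; have := modz_ge0 (k e) MN0; have := ltz_pmod (k e) MNpos.
    have := modz_ge0 (k' e) MN0; have := ltz_pmod (k' e) MNpos.
    have := Hb e; have := Hb' e.
    move=> hb' hb g1 l1 g2 l2; rewrite /= !inordK; rewrite /m /p; try lia; move=> h1 h2; split; lia.
  pose w := [ffun e => ((k e - k' e) %/ (M * N))%Z].
  have Hw e : k e - k' e = (M * N) * w e.
    have [h1 _] := Heq e.
    have : (M * N %| k e - k' e)%Z by rewrite -eqz_mod_dvd h1.
    by move/divzK; rewrite ffunE mulrC.
  have bw v : bdry src tgt w v = 0.
    have := @bdry_lin _ _ src tgt ([ffun e => k e - k' e]) (w) (w) (M * N) (0) v.
    rewrite (@bdry_lin _ _ src tgt ([ffun e => k e - k' e]) (k) (k') (1) (-1) v); last by move=> e; rewrite ffunE; ring.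
    rewrite Hd Hd' !ffunE mul0r addr0 => /(_ _)/esym.
    have -> : 1 * - eta v + -1 * - eta v = 0 by ring.
    move=> h; have /h : forall e, [ffun e => k e - k' e] e = M * N * w e + 0 * w e.
      by move=> e; rewrite ffunE Hw; ring.
    by move/eqP; rewrite mulf_eq0 (negbTE MN0) => /eqP.
  exists r => //; exists [ffun e => M * w e]; split; [split|].
  + apply/ffunP => v.
    rewrite (@bdry_lin _ _ src tgt _ (w) (w) (M) (0) v); last by move=> e; rewrite ffunE; ring.
    by rewrite bw ffunE; ring.
  + by move=> e; rewrite ffunE dvdz_mulr.
  + apply/ffunP => e; rewrite !ffunE.
    have [_ h2] := Heq e; have := Hw e.
    have NN : N != 0 by lia.
    rewrite ffunE; move: ((k e - k' e) %/ (M * N))%Z => q h3; apply: (mulfI NN); rewrite /=; have E1 : N * n e - N * (r e + M * q) = ((k' e - N * r e) - (k e - N * n e)) + ((k e - k' e) - M * N * q) by ring.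
    by apply/eqP; rewrite -subr_eq0 E1 h2 h3 !subrr ?addr0.
- case=> r /H1 [t [k' [Hb' [Hd' _]]]] [h [[Hh _] ->]].
  exists [ffun e => k' e + N * h e]; split.
  + move=> e; rewrite !ffunE; have := Hb' e; lia.
  + apply/ffunP => v.
    rewrite (@bdry_lin _ _ src tgt _ (k') (h) (1) (N) v); last by move=> e; rewrite ffunE; ring.
    by rewrite Hd' Hh !ffunE; ring.
Qed.
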